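(* In the deterministic generalized top-$k$ selective gossip setting described in the context (with $G$ connected), for any two edges $\{a,b\},\{a',b'\}\in E$ we have $\alpha_{ab}=\alpha_{a'b'}$.
   Context: Fix integers $m\ge2$, $n\ge1$, $k\in[n]$. For $v\in\mathbb{R}^n$ let $\sigma$ be a permutation of $[n]$ with $v_{\sigma(1)}\ge\cdots\ge v_{\sigma(n)}$ and set $T_k(v)=\{j\in[n]: v_j\ge v_{\sigma(k)}\}$. Let $\{i_1(t),i_2(t)\}_{t\ge0}$ be a deterministic sequence of unordered pairs of distinct agents in $[m]$, and let $E$ be the set of pairs $\{a,b\}$ with $\{i_1(t),i_2(t)\}=\{a,b\}$ for infinitely many $t$; assume the graph $G=([m],E)$ is connected. Let $X(0)\in\mathbb{R}^{m\times n}$ and define $X(t)$ by: $S(t)=T_k(X_{i_1(t)}(t))\cup T_k(X_{i_2(t)}(t))$ (where $X_i(t)$ is row $i$), $X_{ij}(t+1)=\tfrac12(X_{i_1(t)j}(t)+X_{i_2(t)j}(t))$ if $i\in\{i_1(t),i_2(t)\}$ and $j\in S(t)$, and $X_{ij}(t+1)=X_{ij}(t)$ otherwise. The limit $X(\infty)=\lim_{t\to\infty}X(t)$ exists. For $\{a,b\}\in E$ let $\beta_{ab}(s)$ be the $s$-th time $t$ with $\{i_1(t),i_2(t)\}=\{a,b\}$, let $S^\infty_{ab}=\bigcap_{t\ge0}\bigcup_{s\ge t}S(\beta_{ab}(s))$, and $\alpha_{ab}=\min_{j\in S^\infty_{ab}}X_{aj}(\infty)$ (which also equals $\min_{j\in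 S^\infty_{ab}}X_{bj}(\infty)$). *)

(* Defs.v *)
From Stdlib Require Import Reals Relations.
Open Scope R_scope.

(* Conventions: agents are 0..m-1, coordinates are 0..n-1 (0-indexed),
   k is 1-indexed with 1 <= k <= n as in the paper, so v_{sigma(k)}
   becomes v (sigma (k-1)). *)

Definition sorting_perm (n : nat) (v : nat -> R) (sigma : nat -> nat) : Prop :=
  (forall p, (p < n)%nat -> (sigma p < n)%nat) /\
  (forall p q, (p < n)%nat -> (q < n)%nat -> sigma p = sigma q -> p = q) /\
  (forall p q, (p < q)%nat -> (q < n)%nat -> v (sigma p) >= v (sigma q)).

(* j \in T_k(v) (the value v_{sigma(k)} does not depend on the choice of sigma) *)
Definition in_Tk (n k : nat) (v : nat -> R) (j : nat) : Prop :=
  (j < n)%nat /\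
  exists sigma, sorting_perm n v sigma /\ v j >= v (sigma (k - 1)%nat).

Definition pair_is (i1 i2 : nat -> nat) (t a b : nat) : Prop :=
  (i1 t = a /\ i2 t = b) \/ (i1 t = b /\ i2 t = a).

Definition active (i1 i2 : nat -> nat) (t i : nat) : Prop :=
  i = i1 t \/ i = i2 t.

Definition in_S (n k : nat) (X : nat -> nat -> nat -> R)
    (i1 i2 : nat -> nat) (t j : nat) : Prop :=
  in_Tk n k (X t (i1 t)) j \/ in_Tk n k (X t (i2 t)) j.

Definition gossip_dynamics (m n k : nat) (X : nat -> nat -> nat -> R)
    (i1 i2 : nat -> nat) : Prop :=
  forall t i j, (i < m)%nat -> (j < n)%nat ->
    (active i1 i2 t i /\ in_S n k X i1 i2 t j ->
       X (S t) i j = (X t (i1 t) j + X t (i2 t) j) / 2) /\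
    (~ (active i1 i2 t i /\ in_S n k X i1 i2 t j) ->
       X (S t) i j = X t i j).

Definition in_E (m : nat) (i1 i2 : nat -> nat) (a b : nat) : Prop :=
  (a < m)%nat /\ (b < m)%nat /\ a <> b /\
  forall T, exists t, (t >= T)%nat /\ pair_is i1 i2 t a b.

Definition connected_E (m : nat) (i1 i2 : nat -> nat) : Prop :=
  forall a b, (a < m)%nat -> (b < m)%nat ->
    clos_refl_trans nat (in_E m i1 i2) a b.

(* j \in S^inf_{ab} = \bigcap_t \bigcup_{s >= t} S(beta_ab(s)), i.e. j lies in
   S(t') for infinitely many activation times t' of the pair {a,b} *)
Definition in_Sinf (n k : nat) (X : nat -> nat -> nat -> R)
    (i1 i2 : nat -> nat) (a b j : nat) : Prop :=
  forall T, exists t, (t >= T)%nat /\ pair_is i1 i2 t a b /\ in_S n k X i1 i2 t j.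

Definition is_alpha (n k : nat) (X : nat -> nat -> nat -> R) (Xinf : nat -> nat -> R)
    (i1 i2 : nat -> nat) (a b : nat) (alpha : R) : Prop :=
  (exists j, in_Sinf n k X i1 i2 a b j /\ Xinf a j = alpha) /\
  (forall j, in_Sinf n k X i1 i2 a b j -> alpha <= Xinf a j).

(* Main.v *)
Require Import Defs.
From Stdlib Require Import Reals Relations Lra Lia List Sorting Permutation FinFun Classical.
Open Scope R_scope.

Lemma insert_sorted (A : Type) (Rl : A -> A -> Prop)
  (tot : forall x y, Rl x y \/ Rl y x)
  (tr : forall x y z, Rl x y -> Rl y z -> Rl x z) :
  forall l a, StronglySorted Rl l -> exists l', Permutation (a :: l) l' /\ StronglySorted Rl l'.
Proof.
  induction l as [|b r IH]; intros a Hs.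
  - exists (a :: nil). split; [apply Permutation_refl|]. constructor; constructor.
  - apply StronglySorted_inv in Hs as [Hr Hf].
    destruct (tot a b) as [Hab|Hba].
    + exists (a :: b :: r). split; [apply Permutation_refl|].
      constructor; [constructor; assumption|].
      constructor; [assumption|]. rewrite Forall_forall in *.
      intros x Hx. eapply tr; [exact Hab| apply Hf; exact Hx].
    + destruct (IH a Hr) as [r' [Hp Hs']].
      exists (b :: r'). split.
      * eapply perm_trans; [apply perm_swap|]. apply perm_skip. exact Hp.
      * constructor; [exact Hs'|]. rewrite Forall_forall in *.
        intros x Hx. apply (Permutation_in _ (Permutation_sym Hp)) in Hx.
        destruct Hx as [<-|Hx]; [exact Hba| apply Hf; exact Hx].
Qed.

Lemma sort_list (A : Type) (Rl : A -> A -> Prop)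
  (tot : forall x y, Rl x y \/ Rl y x)
  (tr : forall x y z, Rl x y -> Rl y z -> Rl x z) :
  forall l, exists l', Permutation l l' /\ StronglySorted Rl l'.
Proof.
  induction l as [|a l IH].
  - exists nil. split; constructor.
  - destruct IH as [l1 [Hp Hs]].
    destruct (insert_sorted A Rl tot tr l1 a Hs) as [l2 [Hp2 Hs2]].
    exists l2. split; [|exact Hs2]. eapply perm_trans; [apply perm_skip; exact Hp| exact Hp2].
Qed.

Lemma ssorted_nth (A : Type) (Rl : A -> A -> Prop) (d : A) :
  forall l p q, StronglySorted Rl l -> (p < q)%nat -> (q < length l)%nat ->
  Rl (nth p l d) (nth q l d).
Proof.
  induction l as [|a l IH]; intros p q Hs Hpq Hq; simpl in *; [lia|].
  apply StronglySorted_inv in Hs as [Hs Hf].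
  destruct p as [|p]; destruct q as [|q]; try lia.
  - rewrite Forall_forall in Hf. apply Hf. apply nth_In. lia.
  - apply IH; auto; lia.
Qed.

Lemma sort_exists (n : nat) (v : nat -> R) : exists sigma, sorting_perm n v sigma.
Proof.
  destruct (sort_list nat (fun i j => v i >= v j)) with (l := seq 0 n) as [l [Hp Hs]].
  { intros x y. destruct (Rle_dec (v x) (v y)); [right|left]; lra. }
  { intros x y z; lra. }
  assert (Hlen : length l = n) by (rewrite <- (Permutation_length Hp); apply length_seq).
  assert (Hnd : NoDup l) by (apply (Permutation_NoDup Hp); apply seq_NoDup).
  exists (fun p => nth p l 0%nat). split; [|split].
  - intros p Hpn. assert (Hin : In (nth p l 0%nat) l) by (apply nth_In; lia).
    apply (Permutation_in _ (Permutation_sym Hp)) in Hin. apply in_seq in Hin. lia.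
  - intros p q Hp' Hq' He. rewrite NoDup_nth in Hnd. apply (Hnd p q); [lia|lia|exact He].
  - intros p q Hpq Hq. apply (ssorted_nth nat (fun i j => v i >= v j) 0%nat l p q Hs Hpq). lia.
Qed.
Definition Ge (n k : nat) (v : nat -> R) (c : R) : Prop :=
  exists L, NoDup L /\ length L = k /\ forall j, In j L -> (j < n)%nat /\ v j >= c.

Lemma sigma_list n k v sigma : sorting_perm n v sigma -> (1 <= k)%nat -> (k <= n)%nat ->
  NoDup (map sigma (seq 0 k)) /\ length (map sigma (seq 0 k)) = k /\
  forall j, In j (map sigma (seq 0 k)) ->
    (j < n)%nat /\ v j >= v (sigma (k-1)%nat) /\ in_Tk n k v j.
Proof.
  intros Hs Hk1 Hkn. destruct Hs as [Hr [Hi Hm]]. split; [|split].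
  - apply Injective_map_NoDup_in; [|apply seq_NoDup].
    intros x y Hx Hy. apply in_seq in Hx, Hy. apply Hi; lia.
  - rewrite length_map, length_seq. reflexivity.
  - intros j Hj. apply in_map_iff in Hj as [p [<- Hp]]. apply in_seq in Hp.
    assert (Hv : v (sigma p) >= v (sigma (k-1)%nat)).
    { destruct (Nat.eq_dec p (k-1)) as [->|Hne]; [lra|]. apply Hm; lia. }
    split; [apply Hr; lia|]. split; [exact Hv|].
    split; [apply Hr; lia|]. exists sigma. split; [split; [exact Hr|split; assumption]|exact Hv].
Qed.

Lemma Ge_sigma n k v sigma : sorting_perm n v sigma -> (1 <= k)%nat -> (k <= n)%nat ->
  Ge n k v (v (sigma (k-1)%nat)).
Proof.
  intros Hs Hk1 Hkn. destruct (sigma_list n k v sigma Hs Hk1 Hkn) as [A [B C]].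
  exists (map sigma (seq 0 k)). split; [exact A|split; [exact B|]].
  intros j Hj. destruct (C j Hj) as [? [? _]]. split; assumption.
Qed.

Lemma Ge_le n k v sigma c : sorting_perm n v sigma -> (1 <= k)%nat -> (k <= n)%nat ->
  Ge n k v c -> c <= v (sigma (k-1)%nat).
Proof.
  intros Hs Hk1 Hkn [L [Hnd [Hlen HL]]].
  destruct Hs as [Hr [Hi Hm]].
  assert (Hsur : bSurjective n sigma) by (apply bInjective_bSurjective; assumption).
  assert (Hex : exists j, In j L /\ ~ In j (map sigma (seq 0 (k-1)))).
  { apply NNPP. intro Hno.
    assert (Hinc : incl L (map sigma (seq 0 (k-1)))).
    { intros j Hj. apply NNPP. intro Hn. apply Hno. exists j. auto. }
    pose proof (NoDup_incl_length Hnd Hinc) as Hl.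
    rewrite length_map, length_seq in Hl. lia. }
  destruct Hex as [j [HjL Hjn]]. destruct (HL j HjL) as [Hjlt Hvj].
  destruct (Hsur j Hjlt) as [p [Hp Hpj]].
  assert (Hpk : (k - 1 <= p)%nat).
  { destruct (Nat.lt_ge_cases p (k-1)) as [Hlt|]; [|assumption].
    exfalso. apply Hjn. apply in_map_iff. exists p. split; [exact Hpj|]. apply in_seq. lia. }
  subst j. destruct (Nat.eq_dec p (k-1)) as [->|Hne]; [lra|].
  assert (v (sigma (k-1)%nat) >= v (sigma p)) by (apply Hm; lia). lra.
Qed.

Definition IsThr n k v tau := Ge n k v tau /\ forall c, Ge n k v c -> c <= tau.

Lemma thr_exists n k v : (1 <= k)%nat -> (k <= n)%nat -> exists tau, IsThr n k v tau.
Proof.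
  intros Hk1 Hkn. destruct (sort_exists n v) as [sigma Hs].
  exists (v (sigma (k-1)%nat)). split; [apply Ge_sigma; assumption|].
  intros c Hc. apply (Ge_le n k v sigma); assumption.
Qed.

Lemma Ge_close n k v w c eps : Ge n k v c ->
  (forall j, (j < n)%nat -> Rabs (w j - v j) < eps) -> Ge n k w (c - eps).
Proof.
  intros [L [A [B C]]] H. exists L. split; [exact A|split; [exact B|]].
  intros j Hj. destruct (C j Hj) as [Hj1 Hj2]. split; [exact Hj1|].
  specialize (H j Hj1). apply Rabs_def2 in H. lra.
Qed.

Lemma unif (n : nat) (u : nat -> nat -> R) (l : nat -> R) :
  (forall j, (j < n)%nat -> Un_cv (fun t => u t j) (l j)) ->
  forall eps, eps > 0 -> exists N, forall t, (t >= N)%nat -> forall j, (j < n)%nat ->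
    Rabs (u t j - l j) < eps.
Proof.
  intros Hc eps He. induction n as [|n IH].
  - exists 0%nat. intros; lia.
  - destruct IH as [N1 HN1]. { intros j Hj. apply Hc. lia. }
    destruct (Hc n (Nat.lt_succ_diag_r n) eps He) as [N2 HN2].
    exists (Nat.max N1 N2). intros t Ht j Hj.
    destruct (Nat.eq_dec j n) as [->|Hne].
    + apply HN2. lia.
    + apply HN1; lia.
Qed.

Lemma pigeon (P : nat -> nat -> Prop) : forall N,
  (forall T, exists t, (t >= T)%nat /\ exists j, (j < N)%nat /\ P t j) ->
  exists j, (j < N)%nat /\ forall T, exists t, (t >= T)%nat /\ P t j.
Proof.
  induction N as [|N IH]; intros H.
  - destruct (H 0%nat) as [t [_ [j [Hj _]]]]. lia.
  - destruct (classic (forall T, exists t, (t >= T)%nat /\ P t N)) as [Hy|Hn].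
    + exists N. split; [lia|exact Hy].
    + apply not_all_ex_not in Hn as [T0 HT0].
      destruct IH as [j [Hj HjP]].
      * intros T. destruct (H (Nat.max T T0)) as [t [Ht [j [Hj HP]]]].
        exists t. split; [lia|]. exists j. split; [|exact HP].
        destruct (Nat.eq_dec j N) as [->|]; [|lia].
        exfalso. apply HT0. exists t. split; [lia|exact HP].
      * exists j. split; [lia|exact HjP].
Qed.
Lemma act_eq m n k X i1 i2 t a b j : gossip_dynamics m n k X i1 i2 ->
  (a < m)%nat -> (b < m)%nat -> (j < n)%nat -> pair_is i1 i2 t a b ->
  in_S n k X i1 i2 t j -> X (S t) a j = X (S t) b j.
Proof.
  intros hd Ha Hb Hj Hp HS.
  destruct (hd t a j Ha Hj) as [Ea _]. destruct (hd t b j Hb Hj) as [Eb _].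
  rewrite Ea, Eb; [reflexivity| |]; split; try exact HS;
  unfold active; destruct Hp as [[-> ->]|[-> ->]]; auto.
Qed.

Lemma in_S_pair n k X i1 i2 t a b j : pair_is i1 i2 t a b -> in_S n k X i1 i2 t j ->
  in_Tk n k (X t a) j \/ in_Tk n k (X t b) j.
Proof.
  unfold in_S. intros [[-> ->]|[-> ->]] [H|H]; auto.
Qed.

Lemma in_S_of n k X i1 i2 t a b j : pair_is i1 i2 t a b -> in_Tk n k (X t a) j ->
  in_S n k X i1 i2 t j.
Proof.
  unfold in_S. intros [[-> ->]|[-> ->]] H; auto.
Qed.

Lemma in_Tk_bound n k v j c : in_Tk n k v j -> (1 <= k)%nat -> (k <= n)%nat ->
  Ge n k v c -> c <= v j.
Proof.
  intros [Hj [sigma [Hs Hv]]] Hk1 Hkn HG.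
  pose proof (Ge_le n k v sigma c Hs Hk1 Hkn HG). lra.
Qed.

Lemma in_E_sym m i1 i2 a b : in_E m i1 i2 a b -> in_E m i1 i2 b a.
Proof.
  intros [Ha [Hb [Hne H]]]. split; [exact Hb|split; [exact Ha|split; [auto|]]].
  intros T. destruct (H T) as [t [Ht Hp]]. exists t. split; [exact Ht|].
  unfold pair_is in *. tauto.
Qed.

Lemma eps_eq (x y : R) : (forall eps, 0 < eps -> Rabs (x - y) < eps) -> x = y.
Proof.
  intros H. destruct (Req_dec x y) as [|Hne]; [assumption|].
  exfalso. specialize (H (Rabs (x - y))). 
  assert (0 < Rabs (x - y)) by (apply Rabs_pos_lt; lra). specialize (H H0). lra.
Qed.

Lemma edge_le m n k i1 i2 X Xinf a b ta tb
    (hk1 : (1 <= k)%nat) (hkn : (k <= n)%nat)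
    (hdyn : gossip_dynamics m n k X i1 i2)
    (hlim : forall i j, (i < m)%nat -> (j < n)%nat ->
              Un_cv (fun t => X t i j) (Xinf i j)) :
  in_E m i1 i2 a b -> IsThr n k (Xinf a) ta -> IsThr n k (Xinf b) tb -> ta <= tb.
Proof.
  intros [Ha [Hb [Hne HE]]] [Gta Mta] [Gtb Mtb].
  apply Rle_plus_epsilon. intros eps He.
  assert (He4 : eps / 4 > 0) by lra.
  destruct (unif n (fun t j => X t a j) (Xinf a) (fun j Hj => hlim a j Ha Hj) _ He4) as [N1 H1].
  destruct (unif n (fun t j => X t b j) (Xinf b) (fun j Hj => hlim b j Hb Hj) _ He4) as [N2 H2].
  destruct (HE (Nat.max N1 N2)) as [t [Ht Hp]].
  destruct (sort_exists n (X t a)) as [sigma Hs].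
  destruct (sigma_list n k (X t a) sigma Hs hk1 hkn) as [A [B C]].
  assert (Hth : ta - eps/4 <= X t a (sigma (k-1)%nat)).
  { apply (Ge_le n k (X t a) sigma); auto.
    apply (Ge_close n k (Xinf a)); auto. intros j Hj. apply H1; [lia|exact Hj]. }
  assert (ta - eps <= tb); [|lra].
  apply Mtb. exists (map sigma (seq 0 k)). split; [exact A|split; [exact B|]].
  intros j Hj. destruct (C j Hj) as [Hjn [Hv HT]]. split; [exact Hjn|].
  pose proof (act_eq m n k X i1 i2 t a b j hdyn Ha Hb Hjn Hp
     (in_S_of n k X i1 i2 t a b j Hp HT)) as Heq.
  pose proof (H1 t ltac:(lia) j Hjn) as E1.
  pose proof (H1 (S t) ltac:(lia) j Hjn) as E2.
  pose proof (H2 (S t) ltac:(lia) j Hjn) as E3.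
  apply Rabs_def2 in E1, E2, E3. simpl in *. lra.
Qed.

Lemma edge_eq m n k i1 i2 X Xinf a b ta tb
    (hk1 : (1 <= k)%nat) (hkn : (k <= n)%nat)
    (hdyn : gossip_dynamics m n k X i1 i2)
    (hlim : forall i j, (i < m)%nat -> (j < n)%nat ->
              Un_cv (fun t => X t i j) (Xinf i j)) :
  in_E m i1 i2 a b -> IsThr n k (Xinf a) ta -> IsThr n k (Xinf b) tb -> ta = tb.
Proof.
  intros HE Ha Hb. apply Rle_antisym.
  - apply (edge_le m n k i1 i2 X Xinf a b ta tb); auto.
  - apply (edge_le m n k i1 i2 X Xinf b a tb ta); auto. apply in_E_sym; exact HE.
Qed.

Lemma conn_eq m n k i1 i2 X Xinf
    (hk1 : (1 <= k)%nat) (hkn : (k <= n)%nat)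
    (hdyn : gossip_dynamics m n k X i1 i2)
    (hlim : forall i j, (i < m)%nat -> (j < n)%nat ->
              Un_cv (fun t => X t i j) (Xinf i j)) :
  forall a b, clos_refl_trans nat (in_E m i1 i2) a b ->
  forall ta tb, IsThr n k (Xinf a) ta -> IsThr n k (Xinf b) tb -> ta = tb.
Proof.
  intros a b H. induction H as [x y Hxy|x|x y z Hxy IH1 Hyz IH2]; intros ta tb Ha Hb.
  - apply (edge_eq m n k i1 i2 X Xinf x y ta tb); auto.
  - destruct Ha as [Ga Ma]. destruct Hb as [Gb Mb]. apply Rle_antisym; auto.
  - destruct (thr_exists n k (Xinf y) hk1 hkn) as [ty Hy].
    rewrite (IH1 ta ty Ha Hy). apply IH2; assumption.
Qed.
Lemma alpha_edge m n k i1 i2 X Xinf a b ta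
    (hk1 : (1 <= k)%nat) (hkn : (k <= n)%nat)
    (hdyn : gossip_dynamics m n k X i1 i2)
    (hlim : forall i j, (i < m)%nat -> (j < n)%nat ->
              Un_cv (fun t => X t i j) (Xinf i j)) :
  in_E m i1 i2 a b -> IsThr n k (Xinf a) ta -> is_alpha n k X Xinf i1 i2 a b ta.
Proof.
  intros HE Hta.
  destruct (thr_exists n k (Xinf b) hk1 hkn) as [tb Htb].
  pose proof (edge_eq m n k i1 i2 X Xinf a b ta tb hk1 hkn hdyn hlim HE Hta Htb) as Etab.
  destruct HE as [Ha [Hb [Hne HE]]].
  assert (F1 : forall j, in_Sinf n k X i1 i2 a b j -> Xinf a j = Xinf b j).
  { intros j Hj. apply eps_eq. intros eps He.
    assert (He2 : eps / 2 > 0) by lra.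
    destruct (unif n (fun t j => X t a j) (Xinf a) (fun j Hj => hlim a j Ha Hj) _ He2) as [N1 H1].
    destruct (unif n (fun t j => X t b j) (Xinf b) (fun j Hj => hlim b j Hb Hj) _ He2) as [N2 H2].
    destruct (Hj (Nat.max N1 N2)) as [t [Ht [Hp HS]]].
    assert (Hjn : (j < n)%nat) by (destruct HS as [[? _]|[? _]]; assumption).
    pose proof (act_eq m n k X i1 i2 t a b j hdyn Ha Hb Hjn Hp HS) as Heq.
    pose proof (H1 (S t) ltac:(lia) j Hjn) as E2.
    pose proof (H2 (S t) ltac:(lia) j Hjn) as E3.
    apply Rabs_def2 in E2, E3. simpl in *. apply Rabs_def1; lra. }
  assert (FB : forall j, in_Sinf n k X i1 i2 a b j -> ta <= Xinf a j).
  { intros j Hj. apply Rle_plus_epsilon. intros eps He.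
    assert (He2 : eps / 2 > 0) by lra.
    destruct (unif n (fun t j => X t a j) (Xinf a) (fun j Hj => hlim a j Ha Hj) _ He2) as [N1 H1].
    destruct (unif n (fun t j => X t b j) (Xinf b) (fun j Hj => hlim b j Hb Hj) _ He2) as [N2 H2].
    destruct (Hj (Nat.max N1 N2)) as [t [Ht [Hp HS]]].
    assert (Hjn : (j < n)%nat) by (destruct HS as [[? _]|[? _]]; assumption).
    destruct (in_S_pair n k X i1 i2 t a b j Hp HS) as [HT|HT].
    - pose proof (in_Tk_bound n k (X t a) j (ta - eps/2) HT hk1 hkn) as Hb1.
      assert (ta - eps/2 <= X t a j).
      { apply Hb1. apply (Ge_close n k (Xinf a)); [apply Hta|].
        intros j' Hj'. apply H1; [lia|exact Hj']. }
      pose proof (H1 t ltac:(lia) j Hjn) as E1. apply Rabs_def2 in E1. simpl in *. lra.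
    - pose proof (in_Tk_bound n k (X t b) j (tb - eps/2) HT hk1 hkn) as Hb1.
      assert (tb - eps/2 <= X t b j).
      { apply Hb1. apply (Ge_close n k (Xinf b)); [apply Htb|].
        intros j' Hj'. apply H2; [lia|exact Hj']. }
      pose proof (H2 t ltac:(lia) j Hjn) as E1. apply Rabs_def2 in E1. simpl in *.
      rewrite (F1 j Hj). lra. }
  split; [|exact FB].
  set (P := fun t j => pair_is i1 i2 t a b /\ in_S n k X i1 i2 t j /\
        exists sigma, sorting_perm n (X t a) sigma /\ j = sigma (k-1)%nat).
  destruct (pigeon P n) as [j [Hjn HjP]].
  { intros T. destruct (HE T) as [t [Ht Hp]]. exists t. split; [exact Ht|].
    destruct (sort_exists n (X t a)) as [sigma Hs].
    destruct (sigma_list n k (X t a) sigma Hs hk1 hkn) as [_ [_ C]].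
    assert (Hin : In (sigma (k-1)%nat) (map sigma (seq 0 k))).
    { apply in_map. apply in_seq. lia. }
    destruct (C _ Hin) as [Hlt [_ HT]].
    exists (sigma (k-1)%nat). split; [exact Hlt|].
    split; [exact Hp|]. split; [apply (in_S_of n k X i1 i2 t a b); assumption|].
    exists sigma. split; [exact Hs|reflexivity]. }
  assert (HjS : in_Sinf n k X i1 i2 a b j).
  { intros T. destruct (HjP T) as [t [Ht [Hp [HS _]]]]. exists t. auto. }
  exists j. split; [exact HjS|]. apply Rle_antisym; [|apply FB; exact HjS].
  apply Rle_plus_epsilon. intros eps He.
  assert (He2 : eps / 2 > 0) by lra.
  destruct (unif n (fun t j => X t a j) (Xinf a) (fun j Hj => hlim a j Ha Hj) _ He2) as [N1 H1].
  destruct (HjP N1) as [t [Ht [Hp [HS [sigma [Hs ->]]]]]].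
  assert (Hup : X t a (sigma (k-1)%nat) <= ta + eps/2).
  { destruct (Rle_dec (X t a (sigma (k-1)%nat)) (ta + eps/2)) as [|Hgt]; [assumption|].
    exfalso. pose proof (Ge_sigma n k (X t a) sigma Hs hk1 hkn) as G.
    assert (G' : Ge n k (Xinf a) (X t a (sigma (k-1)%nat) - eps/2)).
    { apply (Ge_close n k (X t a)); [exact G|]. intros j' Hj'.
      rewrite Rabs_minus_sym. apply H1; [lia|exact Hj']. }
    apply (proj2 Hta) in G'. lra. }
  pose proof (H1 t ltac:(lia) _ Hjn) as E1. apply Rabs_def2 in E1. simpl in *. lra.
Qed.

Theorem mainTheorem5 (m n k : nat) (i1 i2 : nat -> nat)
    (X : nat -> nat -> nat -> R) (Xinf : nat -> nat -> R)
    (hm : (2 <= m)%nat) (hn : (1 <= n)%nat) (hk1 : (1 <= k)%nat) (hkn : (k <= n)%nat)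
    (hpair : forall t, (i1 t < m)%nat /\ (i2 t < m)%nat /\ i1 t <> i2 t)
    (hdyn : gossip_dynamics m n k X i1 i2)
    (hconn : connected_E m i1 i2)
    (hlim : forall i j, (i < m)%nat -> (j < n)%nat ->
              Un_cv (fun t => X t i j) (Xinf i j))
    (a b a' b' : nat)
    (hab : in_E m i1 i2 a b) (hab' : in_E m i1 i2 a' b') :
  exists alpha, is_alpha n k X Xinf i1 i2 a b alpha /\
                is_alpha n k X Xinf i1 i2 a' b' alpha.
Proof.
  destruct (thr_exists n k (Xinf a) hk1 hkn) as [ta Hta].
  destruct (thr_exists n k (Xinf a') hk1 hkn) as [ta' Hta'].
  assert (E : ta = ta').
  { apply (conn_eq m n k i1 i2 X Xinf hk1 hkn hdyn hlim a a'); auto.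
    apply hconn; [apply hab|apply hab']. }
  subst ta'. exists ta. split.
  - apply (alpha_edge m n k i1 i2 X Xinf a b ta); auto.
  - apply (alpha_edge m n k i1 i2 X Xinf a' b' ta); auto.
Qed.
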